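(* For every nonempty $V_1\subseteq V$, $$\min_{\mathcal{S}:\ s\in\mathcal{S},\ t\notin\mathcal{S},\ \mathcal{S}\cap V=V_1} c(\mathcal{S},V_\mathcal{H}\setminus\mathcal{S})\;=\;|V_\psi|\Big[\mu_\psi(G)+\big(\rho_\psi^*-\rho_\psi(V_1)\big)|V_1|\Big].$$ Moreover, the minimum is attained by a set $\mathcal{S}$ whose intersection with $\Lambda'$ is the set of all groups in $\Lambda'$ whose common node set is contained in $V_1$.
   Context: Let $G=(V,E)$ be a finite simple undirected graph and $\psi=(V_\psi,E_\psi)$ a pattern graph (a finite graph). A $\psi$-instance in $G$ is a subgraph of $G$ (node set and edge set) isomorphic to $\psi$. For $W\subseteq V$, $\mu_\psi(G[W])$ is the number of $\psi$-instances all of whose nodes lie in $W$, $\mu_\psi(G)=\mu_\psi(G[V])$, and for nonempty $W$, $\rho_\psi(W)=\mu_\psi(G[W])/|W|$; $\rho_\psi^*=\max_{\emptyset\ne W\subseteq V}\rho_\psi(W)$. $deg_G(v,\psi)$ is the number of $\psi$-instances containing $v$. $\Lambda'$ is the partition of the set of all $\psi$-instances of $G$ into groups $g$ of instances having the same node set, denoted $\lambda_g$. The flow network $\mathcal{H}=(V_\mathcal{H},E_\mathcal{H},c)$ has $V_\mathcal{H}=V\cup\{\lambda_g:g\in\Lambda'\}\cup\{s,t\}$ (one new node per group) and arcs: for each $v\in V$, $(s,v)$ of capacity $deg_G(v,\psi)$, $(v,t)$ of capacity $|V_\psi|\rho_\psi^*$, $(v,s),(t,v)$ of capacity $0$; for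 each group $g$ and each $v\in\lambda_g$, $(\lambda_g,v)$ of capacity $|g|(|V_\psi|-1)$ and $(v,\lambda_g)$ of capacity $|g|$; no other arcs. For $s\in\mathcal{S}$, $t\notin\mathcal{S}$, $c(\mathcal{S},V_\mathcal{H}\setminus\mathcal{S})$ is the total capacity of arcs from $\mathcal{S}$ to its complement. *)

(* Defs.v *)
From HB Require Import structures.
From mathcomp Require Import all_boot all_order all_algebra.
Set Implicit Arguments. Unset Strict Implicit. Unset Printing Implicit Defensive.
Import Order.TTheory GRing.Theory Num.Theory.
Local Open Scope ring_scope.

Section Defs.
Variables (T P : finType) (e : rel T) (ep : rel P).

(* A candidate subgraph: node set and edge set (edges = 2-element node sets). *)
Definition subgraph_t := ({set T} * {set {set T}})%type.

Definition is_instance (I : subgraph_t) : bool :=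
  [exists f : {ffun P -> T},
    [&& injectiveb f,
        I.1 == f @: [set: P],
        I.2 == [set [set f x.1; f x.2] | x in [set x : P * P | ep x.1 x.2]]
      & [forall p : P, forall q : P, ep p q ==> e (f p) (f q)]]].

Definition instances : {set subgraph_t} := [set I | is_instance I].

Definition mu (W : {set T}) : nat := #|[set I in instances | I.1 \subset W]|.
Definition muG : nat := mu [set: T].
Definition rho (W : {set T}) : rat := (mu W)%:R / (#|W|)%:R.
(* rho_psi^* ; all rho W are >= 0, so the max with default 0 is the max over
   nonempty W whenever T is nonempty *)
Definition rho_star : rat := \big[Num.max/0]_(W : {set T} | W != set0) rho W.
Definition deg (v : T) : nat := #|[set I in instances | v \in I.1]|.

(* Lambda': groups, identified with their common node sets lambda_g *)
Definition groups : {set {set T}} := [set I.1 | I in instances].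
Definition gsize (W : {set T}) : nat := #|[set I in instances | I.1 == W]|.

Definition kpsi : rat := (#|P|)%:R.

Definition hnode := ((T + {set T}) + bool)%type.
Definition VN (v : T) : hnode := inl (inl v).
Definition GN (W : {set T}) : hnode := inl (inr W).
Definition Src : hnode := inr true.
Definition Snk : hnode := inr false.

Definition VH : {set hnode} :=
  [set x : hnode | match x with inl (inr W) => W \in groups | _ => true end].

Definition cap (x y : hnode) : rat :=
  match x, y with
  | inr true, inl (inl v) => (deg v)%:R
  | inl (inl v), inr false => kpsi * rho_star
  | inl (inr W), inl (inl v) =>
      if (W \in groups) && (v \in W) then (gsize W)%:R * (kpsi - 1) else 0
  | inl (inl v), inl (inr W) =>
      if (W \in groups) && (v \in W) then (gsize W)%:R else 0
  | _, _ => 0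
  end.

Definition cutcap (S : {set hnode}) : rat :=
  \sum_(x in S) \sum_(y in VH :\: S) cap x y.

Definition admissible (V1 : {set T}) (S : {set hnode}) : bool :=
  [&& S \subset VH, Src \in S, Snk \notin S & [set v | VN v \in S] == V1].

End Defs.

(* Main.v *)
Require Import Defs.
From HB Require Import structures.
From mathcomp Require Import all_boot all_order all_algebra zify ring.
Import Order.TTheory GRing.Theory Num.Theory.
Local Open Scope ring_scope.

Section Pf.
Variables (T P : finType) (e : rel T) (ep : rel P) (V1 : {set T}).

Lemma sum_hnode (F : hnode T -> rat) :
  \sum_x F x = \sum_v F (VN v) + \sum_W F (GN W) + F (Src T) + F (Snk T).
Proof. by rewrite big_sumType big_sumType big_bool /= !addrA. Qed.

Lemma sum_in_hnode (A : {set hnode T}) (F : hnode T -> rat) :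
  \sum_(x in A) F x = \sum_v (if VN v \in A then F (VN v) else 0)
   + \sum_W (if GN W \in A then F (GN W) else 0)
   + (if Src T \in A then F (Src T) else 0) + (if Snk T \in A then F (Snk T) else 0).
Proof. by rewrite big_mkcond sum_hnode. Qed.

Lemma cut_pointwise S : admissible e ep V1 S ->
  cutcap e ep S = \sum_v (if v \in V1 then kpsi P * rho_star e ep else (deg e ep v)%:R)
   + \sum_v \sum_W (if (W \in groups e ep) && (v \in W) then
        (if v \in V1 then (if GN W \in S then 0 else (gsize e ep W)%:R)
         else (if GN W \in S then (gsize e ep W)%:R * (kpsi P - 1) else 0)) else 0).
Proof.
case/and4P => SVH srcS snkS /eqP SV.
have VNS v : (VN v \in S) = (v \in V1) by rewrite -SV inE.
have GNS W : GN W \in S -> W \in groups e ep.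
  by move=> /(subsetP SVH); rewrite inE.
rewrite /cutcap sum_in_hnode srcS (negbTE snkS) addr0.
have inner x : \sum_(y in VH e ep :\: S) cap e ep x y =
   \sum_v (if v \in V1 then 0 else cap e ep x (VN v))
   + \sum_W (if (W \in groups e ep) && (GN W \notin S) then cap e ep x (GN W) else 0)
   + cap e ep x (Snk T).
  rewrite sum_in_hnode !inE srcS (negbTE snkS) /= addr0.
  congr (_ + _ + _).
    by apply: eq_bigr => v _; rewrite !inE VNS /=; case: (v \in V1).
  by apply: eq_bigr => W _; rewrite !inE andbC.
under eq_bigr do rewrite inner.
under [X in _ + X + _]eq_bigr do rewrite inner.
rewrite inner /=.
under eq_bigr do rewrite VNS.
have z0 (I : finType) (b : I -> bool) : \sum_(i : I) (if b i then (0:rat) else 0) = 0.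
  by rewrite big1 // => ? _; rewrite if_same.
rewrite [X in _ + X + _](_ : _ = \sum_v \sum_W (if GN W \in S then
     (if v \in V1 then 0 else if (W \in groups e ep) && (v \in W)
       then (gsize e ep W)%:R * (kpsi P - 1) else 0) else 0)); last first.
  rewrite exchange_big; apply: eq_bigr => W _.
  case: ifP => _; last by rewrite big1.
  by rewrite z0 !addr0.
rewrite !z0 ?add0r ?addr0.
rewrite addrC addrA -!big_split; apply: eq_bigr => v _ /=.
case: (v \in V1); rewrite /= ?z0 ?add0r ?addr0.
  rewrite addrC; congr (_ + _); apply: eq_bigr => W _.
  by case: (W \in groups e ep); case: (GN W \in S); case: (v \in W).
congr (_ + _); apply: eq_bigr => W _.
by case: (W \in groups e ep); case: (GN W \in S); case: (v \in W).
Qed.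

Lemma card_sum {X : finType} (A : {set X}) :
  (#|A|)%:R = \sum_x (if x \in A then 1 else 0) :> rat.
Proof. by rewrite -big_mkcond /= sumr_const. Qed.

Lemma card_inst {I} : I \in instances e ep -> #|I.1| = #|P|.
Proof.
rewrite inE => /existsP [f /and4P [/injectiveP finj /eqP -> _ _]].
by rewrite card_imset // cardsT.
Qed.

Lemma card_groups {W} : W \in groups e ep -> #|W| = #|P|.
Proof. by case/imsetP => I II ->; apply: card_inst. Qed.

Definition gS (S : {set hnode T}) W : rat :=
  if W \in groups e ep then
    (if GN W \in S then (gsize e ep W)%:R * (kpsi P - 1) * (#|W :\: V1|)%:R
     else (gsize e ep W)%:R * (#|W :&: V1|)%:R) else 0.

Definition mW W : rat :=
  if W \in groups e ep then
    (if W \subset V1 then 0 else (gsize e ep W)%:R * (#|W :&: V1|)%:R) else 0.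

Lemma cut_groups S : admissible e ep V1 S ->
  cutcap e ep S = (#|V1|)%:R * (kpsi P * rho_star e ep)
   + \sum_v (if v \in V1 then 0 else (deg e ep v)%:R) + \sum_W gS S W.
Proof.
move=> adm; rewrite cut_pointwise //.
congr (_ + _).
  rewrite card_sum big_distrl -big_split /=; apply: eq_bigr => v _.
  by case: (v \in V1); rewrite ?mul1r ?mul0r ?add0r ?addr0.
rewrite exchange_big; apply: eq_bigr => W _; rewrite /gS.
case: (W \in groups e ep) => /=; last by rewrite big1.
rewrite (card_sum (W :\: V1)) (card_sum (W :&: V1)) !big_distrr /=.
case: (GN W \in S); apply: eq_bigr => v _; rewrite !inE;
  case: (v \in V1); case: (v \in W); by rewrite /= ?mulr0 ?mulr1.
Qed.

Lemma gS_ge S W : mW W <= gS S W.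
Proof.
rewrite /mW /gS; case Wg: (W \in groups e ep) => //.
have cW := card_groups Wg.
have := cardsID V1 W; rewrite cW => cID.
case: (boolP (W \subset V1)) => sub.
  have -> : #|W :\: V1| = 0%N by apply/eqP; rewrite cards_eq0 setD_eq0.
  by case: (GN W \in S); rewrite ?mulr0 // mulr_ge0.
have b1 : (0 < #|W :\: V1|)%N by rewrite card_gt0 setD_eq0.
case: (GN W \in S) => //.
rewrite /kpsi -cID -mulrA ler_wpM2l //.
set a := #|W :&: V1|; set b := #|W :\: V1|.
have -> : (a + b)%:R - 1 = ((a + b) - 1)%N%:R :> rat.
  by rewrite natrB ?natrD //; apply: leq_trans b1 (leq_addl _ _).
by rewrite -natrM ler_nat; nia.
Qed.

Lemma ident :
  \sum_v (if v \in V1 then 0 else (deg e ep v)%:R) + \sum_W mW W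
  = kpsi P * ((muG e ep)%:R - (mu e ep V1)%:R).
Proof.
have E1 : \sum_v (if v \in V1 then 0 else (deg e ep v)%:R) =
   \sum_I (if I \in instances e ep then (#|I.1 :\: V1|)%:R else 0) :> rat.
  transitivity (\sum_v \sum_I (if [&& I \in instances e ep, v \in I.1 & v \notin V1]
                   then 1 else 0) : rat).
    apply: eq_bigr => v _; case Vv: (v \in V1) => /=.
      by rewrite big1 // => I _; rewrite !andbF.
    by rewrite /deg card_sum; apply: eq_bigr => I _; rewrite !inE andbT.
  rewrite exchange_big; apply: eq_bigr => I _; case Ii: (I \in instances e ep) => /=.
    by rewrite card_sum; apply: eq_bigr => v _; rewrite !inE andbC.
  by rewrite big1.
have E2 : \sum_W mW W =
   \sum_I (if I \in instances e ep then
      (if I.1 \subset V1 then 0 else (#|I.1 :&: V1|)%:R) else 0) :> rat.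
  transitivity (\sum_W \sum_I (if (I \in instances e ep) && (I.1 == W) then
     (if W \in groups e ep then (if W \subset V1 then 0 else (#|W :&: V1|)%:R) else 0)
     else 0) : rat).
    apply: eq_bigr => W _; rewrite /mW.
    case Wg: (W \in groups e ep); case Ws: (W \subset V1) => /=;
      try by rewrite big1 // => I _; rewrite if_same.
    rewrite /gsize card_sum big_distrl /=; apply: eq_bigr => I _; rewrite !inE.
    by case: (_ && _); rewrite ?mul1r ?mul0r.
  rewrite exchange_big; apply: eq_bigr => I _; case Ii: (I \in instances e ep) => /=;
    last by rewrite big1.
  have Ig : I.1 \in groups e ep by apply: imset_f.
  rewrite (bigD1 I.1) //= eqxx Ig big1 ?addr0 // => W /negbTE.
  by rewrite eq_sym => ->.
have E3 : (muG e ep)%:R - (mu e ep V1)%:R =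
   \sum_I (if I \in instances e ep then
      1 - (if I.1 \subset V1 then 1 else 0) else 0) :> rat.
  rewrite /muG /mu !card_sum -sumrB; apply: eq_bigr => I _; rewrite !inE subsetT andbT.
  by case: (is_instance e ep I) => /=; rewrite ?subr0.
rewrite E1 E2 E3 -big_split mulr_sumr /=; apply: eq_bigr => I _.
case Ii: (I \in instances e ep) => /=; last by rewrite addr0 mulr0.
case Is: (I.1 \subset V1).
  have -> : #|I.1 :\: V1| = 0%N by apply/eqP; rewrite cards_eq0 setD_eq0.
  by rewrite subrr mulr0.
by rewrite ?subr0 ?oppr0 ?addr0 mulr1 -natrD addnC cardsID (card_inst Ii).
Qed.
End Pf.

Theorem lemma10 (T P : finType) (e : rel T) (ep : rel P)
  (He_irr : irreflexive e) (He_sym : symmetric e)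
  (Hp_irr : irreflexive ep) (Hp_sym : symmetric ep)
  (V1 : {set T}) (HV1 : V1 != set0) :
  let rhs := kpsi P * ((muG e ep)%:R
               + (rho_star e ep - rho e ep V1) * (#|V1|)%:R) in
  (forall S : {set hnode T}, admissible e ep V1 S -> rhs <= cutcap e ep S) /\
  (exists S : {set hnode T},
     [/\ admissible e ep V1 S, cutcap e ep S = rhs &
         [set W | GN W \in S] = [set W in groups e ep | W \subset V1]]).
Proof.
move=> rhs.
have V1n0 : (#|V1|)%:R != 0 :> rat by rewrite pnatr_eq0 cards_eq0.
have Hrhs : rhs = (#|V1|)%:R * (kpsi P * rho_star e ep)
                 + kpsi P * ((muG e ep)%:R - (mu e ep V1)%:R).
  rewrite /rhs /rho mulrBl divfK //; ring.
split.
  move=> S adm; rewrite (@cut_groups T P e ep V1 S adm) Hrhs -(@ident T P e ep V1) -addrA lerD2l lerD2l.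
  by apply: ler_sum => W _; apply: gS_ge.
pose S0 := [set x : hnode T | match x with
   | inl (inl v) => v \in V1
   | inl (inr W) => (W \in groups e ep) && (W \subset V1)
   | inr b => b end].
have adm : admissible e ep V1 S0.
  apply/and4P; split.
  - by apply/subsetP => [[[v|W]|b]]; rewrite !inE //= => /andP[].
  - by rewrite inE.
  - by rewrite inE.
  - by apply/eqP/setP => v; rewrite !inE.
exists S0; split => //.
  rewrite (@cut_groups T P e ep V1 S0 adm) Hrhs -(@ident T P e ep V1) -addrA; congr (_ + (_ + _)).
  apply: eq_bigr => W _; rewrite /gS /mW inE /=.
  case Wg: (W \in groups e ep) => //=; case Ws: (W \subset V1) => //.
  have -> : #|W :\: V1| = 0%N by apply/eqP; rewrite cards_eq0 setD_eq0.
  by rewrite mulr0.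
by apply/setP => W; rewrite !inE.
Qed.
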